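(* Let $R$ be a ring and $M$ a retractable left $R$-module. The following are equivalent: (a) $M$ is uniform and $\mathrm{End}_R(M)$ is a domain; (b) $M$ is uniform and every nonzero endomorphism of $M$ is injective; (c) $\mathrm{End}_R(M)$ is a left Ore domain.
   Context: A left $R$-module $M$ is retractable if $\mathrm{Hom}_R(M,N)\neq0$ for every nonzero submodule $N\subseteq M$. $M$ is uniform if any two nonzero submodules have nonzero intersection. A left Ore domain is a domain $S$ with $Sa\cap Sb\neq0$ for all nonzero $a,b\in S$. Endomorphisms are written on the right, so composition $fg$ means first $f$ then $g$. *)

(* Defs.v *)
From HB Require Import structures.
From mathcomp Require Import all_boot all_algebra.
Set Implicit Arguments. Unset Strict Implicit. Unset Printing Implicit Defensive.
Import GRing.Theory.
Local Open Scope ring_scope.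

(* Following the paper, endomorphisms act on the right, so
   the product  f g  in End_R(M) is the function  g \o f  (first f then g). *)

Definition is_endo (R : pzRingType) (M : lmodType R) (f : M -> M) : Prop :=
  forall (a : R) (x y : M), f (a *: x + y) = a *: f x + f y.

Definition nonzero_map (R : pzRingType) (M : lmodType R) (f : M -> M) : Prop :=
  exists x : M, f x <> 0.

Definition endo_mul (R : pzRingType) (M : lmodType R) (f g : M -> M) : M -> M :=
  fun x => g (f x).

Definition is_submodule (R : pzRingType) (M : lmodType R) (N : M -> Prop) : Prop :=
  N 0 /\ forall (a : R) (x y : M), N x -> N y -> N (a *: x + y).

Definition nonzero_submodule (R : pzRingType) (M : lmodType R) (N : M -> Prop) : Prop :=
  exists x : M, N x /\ x <> 0.

(* M is retractable: Hom_R(M,N) <> 0 for every nonzero submodule N.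
   A homomorphism M -> N is identified with an endomorphism of M with image in N. *)
Definition retractable (R : pzRingType) (M : lmodType R) : Prop :=
  forall N : M -> Prop, is_submodule N -> nonzero_submodule N ->
    exists f : M -> M, is_endo f /\ (forall x, N (f x)) /\ nonzero_map f.

Definition uniform (R : pzRingType) (M : lmodType R) : Prop :=
  (exists x : M, x <> 0) /\
  forall N1 N2 : M -> Prop, is_submodule N1 -> is_submodule N2 ->
    nonzero_submodule N1 -> nonzero_submodule N2 ->
    exists x : M, N1 x /\ N2 x /\ x <> 0.

Definition End_domain (R : pzRingType) (M : lmodType R) : Prop :=
  nonzero_map (@id M) /\
  forall f g : M -> M, is_endo f -> is_endo g -> nonzero_map f -> nonzero_map g ->
    nonzero_map (endo_mul f g).

(* End_R(M) is a left Ore domain: a domain with  S a \cap S b <> 0  for all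
   nonzero a, b, i.e. there are s, t in S with  s a = t b <> 0. *)
Definition End_left_Ore_domain (R : pzRingType) (M : lmodType R) : Prop :=
  End_domain M /\
  forall a b : M -> M, is_endo a -> is_endo b -> nonzero_map a -> nonzero_map b ->
    exists s t : M -> M, is_endo s /\ is_endo t /\
      (forall x, endo_mul s a x = endo_mul t b x) /\ nonzero_map (endo_mul s a).

(* Main.v *)
Require Import Defs.
From HB Require Import structures.
From mathcomp Require Import all_boot all_algebra.
From Stdlib Require Import ClassicalEpsilon.
Import GRing.Theory.
Local Open Scope ring_scope.

Set Implicit Arguments.
Section S.
Variables (R : pzRingType) (M : lmodType R).

Lemma endoB (f : M -> M) : is_endo f -> forall x y, f (x - y) = f x - f y.
Proof.
move=> hf x y; have := hf (-1) y x.
by rewrite !scaleN1r [- y + x]addrC [- f y + _]addrC.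
Qed.

Lemma endo0 (f : M -> M) : is_endo f -> f 0 = 0.
Proof. by move=> hf; have := endoB hf 0 0; rewrite !subrr. Qed.

Lemma inj_of_dom : retractable M -> End_domain M ->
  forall f : M -> M, is_endo f -> nonzero_map f -> injective f.
Proof.
move=> hM [_ hD] f hf hnz x y hxy.
case: (eqVneq x y) => // hne; exfalso.
have sub : is_submodule (fun z => f z = 0).
  split; first exact: endo0.
  by move=> a z w hz hw; rewrite hf hz hw scaler0 addr0.
have nz : nonzero_submodule (fun z => f z = 0).
  exists (x - y); split; first by rewrite endoB // hxy subrr.
  by apply/eqP; rewrite subr_eq0.
have [g [hg [hgN hgnz]]] := hM _ sub nz.
have [w hw] := hD g f hg hf hgnz hnz.
by apply: hw; rewrite /endo_mul hgN.
Qed.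

Lemma dom_of_inj : (exists x : M, x <> 0) ->
  (forall f : M -> M, is_endo f -> nonzero_map f -> injective f) -> End_domain M.
Proof.
move=> [x hx] hI; split; first by exists x.
move=> f g hf hg [y hy] hgnz; exists y; rewrite /endo_mul => h.
by apply: hy; apply: (hI g hg hgnz); rewrite h endo0.
Qed.

End S.

Theorem proposition3p1 (R : pzRingType) (M : lmodType R) (hM : retractable M) :
  (uniform M /\ End_domain M <->
   uniform M /\ (forall f : M -> M, is_endo f -> nonzero_map f -> injective f)) /\
  (uniform M /\ (forall f : M -> M, is_endo f -> nonzero_map f -> injective f) <->
   End_left_Ore_domain M).
Proof.
split.
  split=> [[hU hD]|[hU hI]]; split => //; first exact: inj_of_dom.
  exact: dom_of_inj hU.1 hI.
split.
  move=> [hU hI]; split; first exact: dom_of_inj hU.1 hI.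
  move=> a b ha hb hna hnb.
  pose N := fun y : M => (exists u, y = a u) /\ (exists v, y = b v).
  have sub : is_submodule N.
    split; first by split; [exists 0 | exists 0]; rewrite endo0.
    move=> r y z [[u1 ->] [v1 e1]] [[u2 ->] [v2 e2]]; split.
      by exists (r *: u1 + u2); rewrite ha.
    by exists (r *: v1 + v2); rewrite hb -e1 -e2.
  have subA : is_submodule (fun y => exists u, y = a u).
    split; first by exists 0; rewrite endo0.
    by move=> r y z [u1 ->] [u2 ->]; exists (r *: u1 + u2); rewrite ha.
  have subB : is_submodule (fun y => exists u, y = b u).
    split; first by exists 0; rewrite endo0.
    by move=> r y z [u1 ->] [u2 ->]; exists (r *: u1 + u2); rewrite hb.
  have nzA : nonzero_submodule (fun y => exists u, y = a u).
    by case: hna => u hu; exists (a u); split => //; exists u.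
  have nzB : nonzero_submodule (fun y => exists u, y = b u).
    by case: hnb => u hu; exists (b u); split => //; exists u.
  have [y [hyA [hyB hy0]]] := hU.2 _ _ subA subB nzA nzB.
  have [h [hh [hhN hhnz]]] := hM N sub (ex_intro _ y (conj (conj hyA hyB) hy0)).
  have cs : forall x, {u | h x = a u}.
    by move=> x; apply: constructive_indefinite_description; case: (hhN x).
  have ct : forall x, {u | h x = b u}.
    by move=> x; apply: constructive_indefinite_description; case: (hhN x).
  pose s x := sval (cs x); pose t x := sval (ct x).
  have hs x : h x = a (s x) by rewrite /s; case: (cs x).
  have ht x : h x = b (t x) by rewrite /t; case: (ct x).
  exists s, t; split.
    move=> r x z; apply: (hI a ha hna).
    by rewrite ha -!hs hh.
  split.
    move=> r x z; apply: (hI b hb hnb).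
    by rewrite hb -!ht hh.
  split; first by move=> x; rewrite /endo_mul -hs -ht.
  by case: hhnz => x hx; exists x; rewrite /endo_mul -hs.
move=> [hD hO]; split; last exact: inj_of_dom.
split; first by case: hD.1 => x hx; exists x.
move=> N1 N2 s1 s2 n1 n2.
have [f1 [hf1 [hf1N hf1nz]]] := hM N1 s1 n1.
have [f2 [hf2 [hf2N hf2nz]]] := hM N2 s2 n2.
have [s [t [_ [_ [he [x hx]]]]]] := hO f1 f2 hf1 hf2 hf1nz hf2nz.
exists (f1 (s x)); split; first exact: hf1N.
split => //; move: (he x); rewrite /endo_mul => ->; exact: hf2N.
Qed.
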